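(* Every function $f:\mathbb{N}^n\to\mathbb{N}$ that is representable in $\lambda\mu\mathrm{T}$ is representable in Gödel's T: if a closed term $t$ with $\emptyset;\emptyset\vdash t:\mathbb{N}^n\to\mathbb{N}$ represents $f$ in $\lambda\mu\mathrm{T}$, then there is a closed $\lambda\mathrm{T}$-term $t'$ with $\vdash t':\mathbb{N}^n\to\mathbb{N}$ that represents $f$ in Gödel's T.
   Context: $\lambda\mu\mathrm{T}$: types $\rho ::= \mathbb{N}\mid\sigma\to\tau$; terms $t,r,s ::= x \mid \lambda x{:}\rho.r \mid t\,s \mid \mu\alpha{:}\rho.c \mid 0 \mid \mathsf{S}\,t \mid \mathsf{nrec}_\rho\ r\ s\ t$ and commands $c ::= [\alpha]t$ ($x$ ranging over $\lambda$-variables, $\alpha$ over $\mu$-variables). Typing judgments $\Gamma;\Delta\vdash t:\rho$ and $\Gamma;\Delta\vdash c$ are generated by: (var) $x:\rho\in\Gamma \Rightarrow \Gamma;\Delta\vdash x:\rho$; (lambda) $\Gamma,x:\sigma;\Delta\vdash t:\tau \Rightarrow \Gamma;\Delta\vdash\lambda x{:}\sigma.t:\sigma\to\tau$; (app) $\Gamma;\Delta\vdash t:\sigma\to\tau$, $\Gamma;\Delta\vdash s:\sigma$ $\Rightarrow \Gamma;\Delta\vdash ts:\tau$; (zero) $\Gamma;\Delta\vdash 0:\mathbb{N}$; (suc) $\Gamma;\Delta\vdash t:\mathbb{N}\Rightarrow\Gamma;\Delta\vdash \mathsf{S}\,t:\mathbb{N}$; (nrec) $\Gamma;\Delta\vdash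 r:\rho$, $\Gamma;\Delta\vdash s:\mathbb{N}\to\rho\to\rho$, $\Gamma;\Delta\vdash t:\mathbb{N}$ $\Rightarrow \Gamma;\Delta\vdash\mathsf{nrec}_\rho\ r\ s\ t:\rho$; (activate) $\Gamma;\Delta,\alpha:\rho\vdash c\Rightarrow\Gamma;\Delta\vdash\mu\alpha{:}\rho.c:\rho$; (passivate) $\Gamma;\Delta\vdash t:\rho$, $\alpha:\rho\in\Delta$ $\Rightarrow \Gamma;\Delta\vdash[\alpha]t$. Numerals $\underline{n}:=\mathsf{S}^n0$. Structural substitution $t[\alpha:=\beta E]$ for a context $E ::= \Box \mid E\,t \mid \mathsf{S}\,E \mid \mathsf{nrec}\ r\ s\ E$ is homomorphic (capture-avoiding) except $([\alpha]u)[\alpha:=\beta E]:=[\beta]E[u[\alpha:=\beta E]]$. Reduction of $\lambda\mu\mathrm{T}$ is the compatible closure of: $(\lambda x.t)r\to t[x:=r]$; $\mathsf{S}(\mu\alpha.c)\to\mu\alpha.c[\alpha:=\alpha(\mathsf{S}\,\Box)]$; $(\mu\alpha.c)s\to\mu\alpha.c[\alpha:=\alpha(\Box\,s)]$; $\mu\alpha.[\alpha]t\to t$ if $\alpha\notin FCV(t)$; $[\alpha]\mu\beta.c\to c[\beta:=\alpha\,\Box]$; $\mathsf{nrec}\ r\ s\ 0\to r$; $\mathsf{nrec}\ r\ s\ (\mathsf{S}\,\underline{n})\to s\ \underline{n}\ (\mathsf{nrec}\ r\ s\ \underline{n})$; $\mathsf{nrec}\ r\ s\ (\mu\alpha.c)\to\mu\alpha.c[\alpha:=\alpha(\mathsf{nrec}\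 r\ s\ \Box)]$; conversion $=$ is its equivalence closure. Gödel's T ($\lambda\mathrm{T}$) is the $\mu$-free fragment with typing rules (var),(lambda),(app),(zero),(suc),(nrec) (no $\Delta$) and reduction the compatible closure of $(\lambda x.t)r\to t[x:=r]$, $\mathsf{nrec}\ r\ s\ 0\to r$, $\mathsf{nrec}\ r\ s\ (\mathsf{S}\,t)\to s\ t\ (\mathsf{nrec}\ r\ s\ t)$, with conversion $=$ its equivalence closure. A function $f:\mathbb{N}^n\to\mathbb{N}$ is representable in a system if there is a closed term $t$ of type $\mathbb{N}^n\to\mathbb{N}$ (i.e. $\mathbb{N}\to\dots\to\mathbb{N}\to\mathbb{N}$) with $t\,\underline{m_1}\cdots\underline{m_n}=\underline{f(m_1,\dots,m_n)}$ for all $m_1,\dots,m_n\in\mathbb{N}$. *)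

(* Defs.v *)
(* Syntax with de Bruijn indices: two separate index spaces,
   one for lambda-variables (bound by Lam) and one for mu-variables (bound by Mu). *)
From Stdlib Require Import List Arith Relations.
Import ListNotations.

Inductive ty : Type :=
| TN : ty
| TArr : ty -> ty -> ty.

Fixpoint arrN (n : nat) : ty :=
  match n with 0 => TN | S m => TArr TN (arrN m) end.

Inductive tm : Type :=
| Var  : nat -> tm
| Lam  : ty -> tm -> tm
| App  : tm -> tm -> tm
| Mu   : ty -> cmd -> tm
| Zero : tm
| Suc  : tm -> tm
| Nrec : ty -> tm -> tm -> tm -> tm
with cmd : Type :=
| Pass : nat -> tm -> cmd.

Fixpoint num (n : nat) : tm :=
  match n with 0 => Zero | S m => Suc (num m) end.

Definition apps (t : tm) (l : list tm) : tm := fold_left App l t.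

Fixpoint lift_l (k : nat) (t : tm) : tm :=
  match t with
  | Var n => if Nat.ltb n k then Var n else Var (S n)
  | Lam A u => Lam A (lift_l (S k) u)
  | App u v => App (lift_l k u) (lift_l k v)
  | Mu A c => Mu A (lift_l_c k c)
  | Zero => Zero
  | Suc u => Suc (lift_l k u)
  | Nrec A r s u => Nrec A (lift_l k r) (lift_l k s) (lift_l k u)
  end
with lift_l_c (k : nat) (c : cmd) : cmd :=
  match c with Pass a u => Pass a (lift_l k u) end.

Fixpoint lift_m (k : nat) (t : tm) : tm :=
  match t with
  | Var n => Var n
  | Lam A u => Lam A (lift_m k u)
  | App u v => App (lift_m k u) (lift_m k v)
  | Mu A c => Mu A (lift_m_c (S k) c)
  | Zero => Zero
  | Suc u => Suc (lift_m k u)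
  | Nrec A r s u => Nrec A (lift_m k r) (lift_m k s) (lift_m k u)
  end
with lift_m_c (k : nat) (c : cmd) : cmd :=
  match c with Pass a u => Pass (if Nat.ltb a k then a else S a) (lift_m k u) end.

Fixpoint subst_l (k : nat) (r : tm) (t : tm) : tm :=
  match t with
  | Var n => if Nat.ltb n k then Var n else if Nat.eqb n k then r else Var (pred n)
  | Lam A u => Lam A (subst_l (S k) (lift_l 0 r) u)
  | App u v => App (subst_l k r u) (subst_l k r v)
  | Mu A c => Mu A (subst_l_c k (lift_m 0 r) c)
  | Zero => Zero
  | Suc u => Suc (subst_l k r u)
  | Nrec A s1 s2 u => Nrec A (subst_l k r s1) (subst_l k r s2) (subst_l k r u)
  end
with subst_l_c (k : nat) (r : tm) (c : cmd) : cmd :=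
  match c with Pass a u => Pass a (subst_l k r u) end.

Definition upren (f : nat -> nat) (n : nat) : nat :=
  match n with 0 => 0 | S m => S (f m) end.

Fixpoint ren_m (f : nat -> nat) (t : tm) : tm :=
  match t with
  | Var n => Var n
  | Lam A u => Lam A (ren_m f u)
  | App u v => App (ren_m f u) (ren_m f v)
  | Mu A c => Mu A (ren_m_c (upren f) c)
  | Zero => Zero
  | Suc u => Suc (ren_m f u)
  | Nrec A r s u => Nrec A (ren_m f r) (ren_m f s) (ren_m f u)
  end
with ren_m_c (f : nat -> nat) (c : cmd) : cmd :=
  match c with Pass a u => Pass (f a) (ren_m f u) end.

Inductive ectx : Type :=
| Hole : ectx
| EApp : ectx -> tm -> ectx
| ESuc : ectx -> ectx
| ENrec : ty -> tm -> tm -> ectx -> ectx.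

Fixpoint plug (E : ectx) (u : tm) : tm :=
  match E with
  | Hole => u
  | EApp E' t => App (plug E' u) t
  | ESuc E' => Suc (plug E' u)
  | ENrec A r s E' => Nrec A r s (plug E' u)
  end.

Fixpoint lift_l_e (k : nat) (E : ectx) : ectx :=
  match E with
  | Hole => Hole
  | EApp E' t => EApp (lift_l_e k E') (lift_l k t)
  | ESuc E' => ESuc (lift_l_e k E')
  | ENrec A r s E' => ENrec A (lift_l k r) (lift_l k s) (lift_l_e k E')
  end.

Fixpoint lift_m_e (k : nat) (E : ectx) : ectx :=
  match E with
  | Hole => Hole
  | EApp E' t => EApp (lift_m_e k E') (lift_m k t)
  | ESuc E' => ESuc (lift_m_e k E')
  | ENrec A r s E' => ENrec A (lift_m k r) (lift_m k s) (lift_m_e k E')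
  end.

(* structural substitution t[alpha := alpha E] with alpha = mu-variable k:
   ([k]u)[k := k E] = [k] E[u[k := k E]], homomorphic (capture-avoiding) otherwise *)
Fixpoint sstruct (k : nat) (E : ectx) (t : tm) : tm :=
  match t with
  | Var n => Var n
  | Lam A u => Lam A (sstruct k (lift_l_e 0 E) u)
  | App u v => App (sstruct k E u) (sstruct k E v)
  | Mu A c => Mu A (sstruct_c (S k) (lift_m_e 0 E) c)
  | Zero => Zero
  | Suc u => Suc (sstruct k E u)
  | Nrec A r s u => Nrec A (sstruct k E r) (sstruct k E s) (sstruct k E u)
  end
with sstruct_c (k : nat) (E : ectx) (c : cmd) : cmd :=
  match c with
  | Pass a u => if Nat.eqb a k then Pass a (plug E (sstruct k E u))
                else Pass a (sstruct k E u)
  end.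

(* c[beta := alpha []] where beta is the mu-variable 0 being removed *)
Definition rename0 (a : nat) (n : nat) : nat :=
  match n with 0 => a | S m => m end.

Inductive has_type : list ty -> list ty -> tm -> ty -> Prop :=
| ty_var G D x A : nth_error G x = Some A -> has_type G D (Var x) A
| ty_lam G D A B t : has_type (A :: G) D t B -> has_type G D (Lam A t) (TArr A B)
| ty_app G D A B t s : has_type G D t (TArr A B) -> has_type G D s A ->
    has_type G D (App t s) B
| ty_zero G D : has_type G D Zero TN
| ty_suc G D t : has_type G D t TN -> has_type G D (Suc t) TN
| ty_nrec G D A r s t : has_type G D r A -> has_type G D s (TArr TN (TArr A A)) ->
    has_type G D t TN -> has_type G D (Nrec A r s t) A
| ty_mu G D A c : has_type_c G (A :: D) c -> has_type G D (Mu A c) A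
with has_type_c : list ty -> list ty -> cmd -> Prop :=
| ty_pass G D a A t : has_type G D t A -> nth_error D a = Some A ->
    has_type_c G D (Pass a t).

Inductive step : tm -> tm -> Prop :=
| st_beta A t r : step (App (Lam A t) r) (subst_l 0 r t)
| st_suc_mu A c : step (Suc (Mu A c)) (Mu A (sstruct_c 0 (ESuc Hole) c))
| st_app_mu A B c s :
    step (App (Mu (TArr A B) c) s) (Mu B (sstruct_c 0 (EApp Hole (lift_m 0 s)) c))
| st_mu_eta A t : step (Mu A (Pass 0 (lift_m 0 t))) t   (* alpha not free in t *)
| st_nrec_0 A r s : step (Nrec A r s Zero) r
| st_nrec_S A r s n :
    step (Nrec A r s (Suc (num n))) (App (App s (num n)) (Nrec A r s (num n)))
| st_nrec_mu A B r s c :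
    step (Nrec A r s (Mu B c))
         (Mu A (sstruct_c 0 (ENrec A (lift_m 0 r) (lift_m 0 s) Hole) c))
| st_lam A t t' : step t t' -> step (Lam A t) (Lam A t')
| st_app1 t t' s : step t t' -> step (App t s) (App t' s)
| st_app2 t s s' : step s s' -> step (App t s) (App t s')
| st_mu A c c' : step_c c c' -> step (Mu A c) (Mu A c')
| st_suc t t' : step t t' -> step (Suc t) (Suc t')
| st_nrec1 A r r' s t : step r r' -> step (Nrec A r s t) (Nrec A r' s t)
| st_nrec2 A r s s' t : step s s' -> step (Nrec A r s t) (Nrec A r s' t)
| st_nrec3 A r s t t' : step t t' -> step (Nrec A r s t) (Nrec A r s t')
with step_c : cmd -> cmd -> Prop :=
| stc_mu a A c : step_c (Pass a (Mu A c)) (ren_m_c (rename0 a) c)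
| stc_pass a t t' : step t t' -> step_c (Pass a t) (Pass a t').

Definition conv : tm -> tm -> Prop := clos_refl_sym_trans tm step.

Definition representable_lmT (n : nat) (f : list nat -> nat) : Prop :=
  exists t : tm, has_type [] [] t (arrN n) /\
    forall ms : list nat, length ms = n ->
      conv (apps t (map num ms)) (num (f ms)).

Inductive Ttm : Type :=
| TVar  : nat -> Ttm
| TLam  : ty -> Ttm -> Ttm
| TApp  : Ttm -> Ttm -> Ttm
| TZero : Ttm
| TSuc  : Ttm -> Ttm
| TNrec : ty -> Ttm -> Ttm -> Ttm -> Ttm.

Fixpoint Tnum (n : nat) : Ttm :=
  match n with 0 => TZero | S m => TSuc (Tnum m) end.

Definition Tapps (t : Ttm) (l : list Ttm) : Ttm := fold_left TApp l t.

Fixpoint Tlift (k : nat) (t : Ttm) : Ttm :=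
  match t with
  | TVar n => if Nat.ltb n k then TVar n else TVar (S n)
  | TLam A u => TLam A (Tlift (S k) u)
  | TApp u v => TApp (Tlift k u) (Tlift k v)
  | TZero => TZero
  | TSuc u => TSuc (Tlift k u)
  | TNrec A r s u => TNrec A (Tlift k r) (Tlift k s) (Tlift k u)
  end.

Fixpoint Tsubst (k : nat) (r : Ttm) (t : Ttm) : Ttm :=
  match t with
  | TVar n => if Nat.ltb n k then TVar n else if Nat.eqb n k then r else TVar (pred n)
  | TLam A u => TLam A (Tsubst (S k) (Tlift 0 r) u)
  | TApp u v => TApp (Tsubst k r u) (Tsubst k r v)
  | TZero => TZero
  | TSuc u => TSuc (Tsubst k r u)
  | TNrec A s1 s2 u => TNrec A (Tsubst k r s1) (Tsubst k r s2) (Tsubst k r u)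
  end.

Inductive Thas_type : list ty -> Ttm -> ty -> Prop :=
| Tty_var G x A : nth_error G x = Some A -> Thas_type G (TVar x) A
| Tty_lam G A B t : Thas_type (A :: G) t B -> Thas_type G (TLam A t) (TArr A B)
| Tty_app G A B t s : Thas_type G t (TArr A B) -> Thas_type G s A ->
    Thas_type G (TApp t s) B
| Tty_zero G : Thas_type G TZero TN
| Tty_suc G t : Thas_type G t TN -> Thas_type G (TSuc t) TN
| Tty_nrec G A r s t : Thas_type G r A -> Thas_type G s (TArr TN (TArr A A)) ->
    Thas_type G t TN -> Thas_type G (TNrec A r s t) A.

Inductive Tstep : Ttm -> Ttm -> Prop :=
| Tst_beta A t r : Tstep (TApp (TLam A t) r) (Tsubst 0 r t)
| Tst_nrec_0 A r s : Tstep (TNrec A r s TZero) r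
| Tst_nrec_S A r s t : Tstep (TNrec A r s (TSuc t)) (TApp (TApp s t) (TNrec A r s t))
| Tst_lam A t t' : Tstep t t' -> Tstep (TLam A t) (TLam A t')
| Tst_app1 t t' s : Tstep t t' -> Tstep (TApp t s) (TApp t' s)
| Tst_app2 t s s' : Tstep s s' -> Tstep (TApp t s) (TApp t s')
| Tst_suc t t' : Tstep t t' -> Tstep (TSuc t) (TSuc t')
| Tst_nrec1 A r r' s t : Tstep r r' -> Tstep (TNrec A r s t) (TNrec A r' s t)
| Tst_nrec2 A r s s' t : Tstep s s' -> Tstep (TNrec A r s t) (TNrec A r s' t)
| Tst_nrec3 A r s t t' : Tstep t t' -> Tstep (TNrec A r s t) (TNrec A r s t').

Definition Tconv : Ttm -> Ttm -> Prop := clos_refl_sym_trans Ttm Tstep.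

Definition representable_T (n : nat) (f : list nat -> nat) : Prop :=
  exists t : Ttm, Thas_type [] t (arrN n) /\
    forall ms : list nat, length ms = n ->
      Tconv (Tapps t (map Tnum ms)) (Tnum (f ms)).

(* Main.v *)
Require Import Defs.
From Stdlib Require Import List Arith Relations Lia FunctionalExtensionality.
Import ListNotations.

Inductive U : Type :=
| UVar : nat -> U | ULam : U -> U | UApp : U -> U -> U
| UZero : U | USuc : U -> U | UNrec : U -> U -> U -> U.

Definition scons {X} (x : X) (f : nat -> X) (n : nat) : X :=
  match n with 0 => x | S m => f m end.

Definition upr (xi : nat -> nat) : nat -> nat := scons 0 (fun n => S (xi n)).

Fixpoint ren (xi : nat -> nat) (t : U) : U :=
  match t with
  | UVar n => UVar (xi n)
  | ULam b => ULam (ren (upr xi) b)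
  | UApp a b => UApp (ren xi a) (ren xi b)
  | UZero => UZero
  | USuc a => USuc (ren xi a)
  | UNrec a b c => UNrec (ren xi a) (ren xi b) (ren xi c)
  end.

Notation sh := (ren S).
Definition up (th : nat -> U) : nat -> U := scons (UVar 0) (fun n => sh (th n)).

Fixpoint subst (th : nat -> U) (t : U) : U :=
  match t with
  | UVar n => th n
  | ULam b => ULam (subst (up th) b)
  | UApp a b => UApp (subst th a) (subst th b)
  | UZero => UZero
  | USuc a => USuc (subst th a)
  | UNrec a b c => UNrec (subst th a) (subst th b) (subst th c)
  end.

Lemma ren_ren : forall t xi zeta, ren xi (ren zeta t) = ren (fun n => xi (zeta n)) t.
Proof.
  induction t; intros; simpl; f_equal; auto.
  rewrite IHt. f_equal. apply functional_extensionality; intros [|n]; reflexivity.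
Qed.

Lemma ren_subst : forall t xi th, ren xi (subst th t) = subst (fun n => ren xi (th n)) t.
Proof.
  induction t; intros; simpl; f_equal; auto.
  rewrite IHt. f_equal. apply functional_extensionality; intros [|n]; simpl; auto.
  rewrite !ren_ren. reflexivity.
Qed.

Lemma subst_ren : forall t xi th, subst th (ren xi t) = subst (fun n => th (xi n)) t.
Proof.
  induction t; intros; simpl; f_equal; auto.
  rewrite IHt. f_equal. apply functional_extensionality; intros [|n]; reflexivity.
Qed.

Lemma subst_subst : forall t th th', subst th (subst th' t) = subst (fun n => subst th (th' n)) t.
Proof.
  induction t; intros; simpl; f_equal; auto.
  rewrite IHt. f_equal. apply functional_extensionality; intros [|n]; simpl; auto.
  rewrite subst_ren, ren_subst. reflexivity.
Qed.

Lemma ren_as_subst : forall t xi, ren xi t = subst (fun n => UVar (xi n)) t.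
Proof.
  induction t; intros; simpl; f_equal; auto.
  rewrite IHt. f_equal. apply functional_extensionality; intros [|n]; reflexivity.
Qed.

Lemma subst_id : forall t, subst UVar t = t.
Proof.
  induction t; simpl; f_equal; auto.
  replace (up UVar) with UVar; auto.
  apply functional_extensionality; intros [|n]; reflexivity.
Qed.

Lemma subst_ext : forall t th th', (forall n, th n = th' n) -> subst th t = subst th' t.
Proof. intros. f_equal. apply functional_extensionality; auto. Qed.

Lemma subst_up_sh : forall x th, subst (up th) (sh x) = sh (subst th x).
Proof. intros. rewrite subst_ren, ren_subst. reflexivity. Qed.

Lemma subst_scons_sh : forall x a th, subst (scons a th) (sh x) = subst th x.
Proof. intros. rewrite subst_ren. reflexivity. Qed.

Lemma subst_beta_sh : forall x a, subst (scons a UVar) (sh x) = x.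
Proof. intros. rewrite subst_scons_sh. apply subst_id. Qed.

Inductive ustep : U -> U -> Prop :=
| us_beta b a : ustep (UApp (ULam b) a) (subst (scons a UVar) b)
| us_nrec0 r s : ustep (UNrec r s UZero) r
| us_nrecS r s t : ustep (UNrec r s (USuc t)) (UApp (UApp s t) (UNrec r s t))
| us_lam b b' : ustep b b' -> ustep (ULam b) (ULam b')
| us_app1 a a' b : ustep a a' -> ustep (UApp a b) (UApp a' b)
| us_app2 a b b' : ustep b b' -> ustep (UApp a b) (UApp a b')
| us_suc a a' : ustep a a' -> ustep (USuc a) (USuc a')
| us_nrec1 a a' b c : ustep a a' -> ustep (UNrec a b c) (UNrec a' b c)
| us_nrec2 a b b' c : ustep b b' -> ustep (UNrec a b c) (UNrec a b' c)
| us_nrec3 a b c c' : ustep c c' -> ustep (UNrec a b c) (UNrec a b c').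

Definition uconv := clos_refl_sym_trans U ustep.

Lemma uconv_refl : forall a, uconv a a. Proof. intros; apply rst_refl. Qed.
Lemma uconv_sym : forall a b, uconv a b -> uconv b a. Proof. intros; apply rst_sym; auto. Qed.
Lemma uconv_trans : forall a b c, uconv a b -> uconv b c -> uconv a c.
Proof. intros; eapply rst_trans; eauto. Qed.
Lemma uconv_step : forall a b, ustep a b -> uconv a b. Proof. intros; apply rst_step; auto. Qed.

Lemma uconv_map : forall (f : U -> U), (forall a b, ustep a b -> ustep (f a) (f b)) ->
  forall a b, uconv a b -> uconv (f a) (f b).
Proof.
  intros f Hf a b H; induction H.
  - apply uconv_step; auto.
  - apply uconv_refl.
  - apply uconv_sym; auto.
  - eapply uconv_trans; eauto.
Qed.

Lemma uconv_lam : forall a b, uconv a b -> uconv (ULam a) (ULam b).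
Proof. apply uconv_map; intros; constructor; auto. Qed.
Lemma uconv_suc : forall a b, uconv a b -> uconv (USuc a) (USuc b).
Proof. apply uconv_map; intros; constructor; auto. Qed.
Lemma uconv_app : forall a a' b b', uconv a a' -> uconv b b' -> uconv (UApp a b) (UApp a' b').
Proof.
  intros. eapply uconv_trans.
  - apply (uconv_map (fun x => UApp x b)); [intros; constructor; auto| eauto].
  - apply (uconv_map (fun x => UApp a' x)); [intros; constructor; auto| eauto].
Qed.
Lemma uconv_nrec : forall a a' b b' c c', uconv a a' -> uconv b b' -> uconv c c' ->
  uconv (UNrec a b c) (UNrec a' b' c').
Proof.
  intros. eapply uconv_trans; [|eapply uconv_trans].
  - apply (uconv_map (fun x => UNrec x b c)); [intros; constructor; auto| eauto].
  - apply (uconv_map (fun x => UNrec a' x c)); [intros; constructor; auto| eauto].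
  - apply (uconv_map (fun x => UNrec a' b' x)); [intros; constructor; auto| eauto].
Qed.

Lemma ustep_subst : forall a b, ustep a b -> forall th, ustep (subst th a) (subst th b).
Proof.
  induction 1; intros; simpl; try (constructor; auto; fail).
  - replace (subst th (subst (scons a UVar) b)) with
      (subst (scons (subst th a) UVar) (subst (up th) b)).
    + constructor.
    + rewrite !subst_subst. apply subst_ext. intros [|n]; simpl; auto.
      rewrite subst_beta_sh. reflexivity.
Qed.

Lemma uconv_subst : forall a b th, uconv a b -> uconv (subst th a) (subst th b).
Proof. intros. apply (uconv_map (subst th)); auto. intros; apply ustep_subst; auto. Qed.

Lemma uconv_ren : forall a b xi, uconv a b -> uconv (ren xi a) (ren xi b).
Proof. intros. rewrite !ren_as_subst. apply uconv_subst; auto. Qed.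

Lemma uconv_subst_env : forall t th th', (forall n, uconv (th n) (th' n)) ->
  uconv (subst th t) (subst th' t).
Proof.
  induction t; intros; simpl; auto using uconv_lam, uconv_app, uconv_suc, uconv_nrec, uconv_refl.
  apply uconv_lam. apply IHt. intros [|n]; simpl. apply uconv_refl. apply uconv_ren; auto.
Qed.

Definition upair (a S : U) := ULam (UApp (UApp (UVar 0) (sh a)) (sh S)).
Definition usk (S : U) := ULam (UApp (sh S) (USuc (UVar 0))).
Definition uret (x : U) := ULam (UApp (UVar 0) (sh x)).
Definition ueta (x : U) := ULam (UApp (sh x) (UVar 0)).
Definition unk (vr g S : U) := ULam (UApp (UNrec (sh vr) (sh g) (UVar 0)) (sh S)).
Definition shf (f : nat -> U) : nat -> U := fun n => sh (f n).
Definition gstack := upair (uret (UVar 2)) (upair (ueta (UVar 1)) (UVar 0)).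

Fixpoint Tr (t : tm) (rho sg : nat -> U) (S : U) {struct t} : U :=
  match t with
  | Var x => UApp (rho x) S
  | Lam _ b => UApp S (ULam (ULam (Tr b (scons (UVar 1) (shf (shf rho))) (shf (shf sg)) (UVar 0))))
  | App a b => Tr a rho sg (upair (ULam (Tr b (shf rho) (shf sg) (UVar 0))) S)
  | Mu _ c => TrC c rho (scons S sg)
  | Zero => UApp S UZero
  | Suc a => Tr a rho sg (usk S)
  | Nrec _ r s a => Tr a rho sg (unk (ULam (Tr r (shf rho) (shf sg) (UVar 0)))
        (ULam (ULam (ULam (Tr s (shf (shf (shf rho))) (shf (shf (shf sg))) gstack)))) S)
  end
with TrC (c : cmd) (rho sg : nat -> U) {struct c} : U :=
  match c with Pass a t => Tr t rho sg (sg a) end.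

Definition val t rho sg := ULam (Tr t (shf rho) (shf sg) (UVar 0)).
Definition Gof s rho sg := ULam (ULam (ULam (Tr s (shf (shf (shf rho))) (shf (shf (shf sg))) gstack))).

Lemma Tr_App : forall a b rho sg S, Tr (App a b) rho sg S = Tr a rho sg (upair (val b rho sg) S).
Proof. reflexivity. Qed.
Lemma Tr_Nrec : forall A r s a rho sg S,
  Tr (Nrec A r s a) rho sg S = Tr a rho sg (unk (val r rho sg) (Gof s rho sg) S).
Proof. reflexivity. Qed.

Scheme tm_ind2 := Induction for tm Sort Prop
with cmd_ind2 := Induction for cmd Sort Prop.
Combined Scheme tm_cmd_ind from tm_ind2, cmd_ind2.

Lemma subst_upair : forall th a S, subst th (upair a S) = upair (subst th a) (subst th S).
Proof. intros; unfold upair; simpl; rewrite !subst_up_sh; reflexivity. Qed.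
Lemma subst_usk : forall th S, subst th (usk S) = usk (subst th S).
Proof. intros; unfold usk; simpl; rewrite !subst_up_sh; reflexivity. Qed.
Lemma subst_uret : forall th S, subst th (uret S) = uret (subst th S).
Proof. intros; unfold uret; simpl; rewrite !subst_up_sh; reflexivity. Qed.
Lemma subst_ueta : forall th S, subst th (ueta S) = ueta (subst th S).
Proof. intros; unfold ueta; simpl; rewrite !subst_up_sh; reflexivity. Qed.
Lemma subst_unk : forall th a b S, subst th (unk a b S) = unk (subst th a) (subst th b) (subst th S).
Proof. intros; unfold unk; simpl; rewrite !subst_up_sh; reflexivity. Qed.

Lemma subst_gstack : forall th, subst (up (up (up th))) gstack = gstack.
Proof.
  intros. unfold gstack. rewrite !subst_upair, subst_uret, subst_ueta. reflexivity.
Qed.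

Lemma shf_subst : forall th (f : nat -> U),
  (fun n => subst (up th) (shf f n)) = shf (fun n => subst th (f n)).
Proof. intros; apply functional_extensionality; intros; unfold shf; apply subst_up_sh. Qed.

Lemma Tr_subst :
  (forall t rho sg S th, subst th (Tr t rho sg S) =
      Tr t (fun n => subst th (rho n)) (fun n => subst th (sg n)) (subst th S)) /\
  (forall c rho sg th, subst th (TrC c rho sg) =
      TrC c (fun n => subst th (rho n)) (fun n => subst th (sg n))).
Proof.
  apply (tm_cmd_ind
    (fun t => forall rho sg S th, subst th (Tr t rho sg S) =
      Tr t (fun n => subst th (rho n)) (fun n => subst th (sg n)) (subst th S))
    (fun c => forall rho sg th, subst th (TrC c rho sg) =
      TrC c (fun n => subst th (rho n)) (fun n => subst th (sg n)))); intros; simpl.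
  - reflexivity.
  - rewrite H. simpl. f_equal. f_equal. f_equal. f_equal.
    + apply functional_extensionality; intros [|n]; simpl; auto.
      unfold shf. rewrite !subst_up_sh. reflexivity.
    + apply functional_extensionality; intros n.
      unfold shf. rewrite !subst_up_sh. reflexivity.
  - rewrite H. rewrite subst_upair. simpl. rewrite H0. simpl.
    rewrite !shf_subst. reflexivity.
  - rewrite H. f_equal. apply functional_extensionality; intros [|n]; reflexivity.
  - reflexivity.
  - rewrite H, subst_usk. reflexivity.
  - rewrite H1, subst_unk. simpl. rewrite H, H0, subst_gstack. simpl.
    rewrite !shf_subst. reflexivity.
  - rewrite H. reflexivity.
Qed.

Lemma Tr_ren : forall t xi rho sg S, ren xi (Tr t rho sg S) =
      Tr t (fun n => ren xi (rho n)) (fun n => ren xi (sg n)) (ren xi S).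
Proof.
  intros. rewrite !ren_as_subst, (proj1 Tr_subst).
  f_equal; apply functional_extensionality; intros; rewrite ren_as_subst; reflexivity.
Qed.

Lemma val_beta : forall t rho sg S, ustep (UApp (val t rho sg) S) (Tr t rho sg S).
Proof.
  intros. unfold val.
  replace (Tr t rho sg S) with (subst (scons S UVar) (Tr t (shf rho) (shf sg) (UVar 0))).
  - constructor.
  - rewrite (proj1 Tr_subst). simpl. unfold shf. f_equal;
    apply functional_extensionality; intros; apply subst_beta_sh.
Qed.

Lemma subst_val : forall t rho sg th, subst th (val t rho sg) =
  val t (fun n => subst th (rho n)) (fun n => subst th (sg n)).
Proof.
  intros. unfold val. simpl. rewrite (proj1 Tr_subst). simpl. rewrite !shf_subst. reflexivity.
Qed.

Lemma subst_Gof : forall t rho sg th, subst th (Gof t rho sg) =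
  Gof t (fun n => subst th (rho n)) (fun n => subst th (sg n)).
Proof.
  intros. unfold Gof. simpl. rewrite (proj1 Tr_subst). rewrite subst_gstack. simpl.
  rewrite !shf_subst. reflexivity.
Qed.

Lemma ren_val : forall t rho sg xi, ren xi (val t rho sg) =
  val t (fun n => ren xi (rho n)) (fun n => ren xi (sg n)).
Proof.
  intros. rewrite !ren_as_subst, subst_val.
  f_equal; apply functional_extensionality; intros; rewrite ren_as_subst; reflexivity.
Qed.
Lemma ren_Gof : forall t rho sg xi, ren xi (Gof t rho sg) =
  Gof t (fun n => ren xi (rho n)) (fun n => ren xi (sg n)).
Proof.
  intros. rewrite !ren_as_subst, subst_Gof.
  f_equal; apply functional_extensionality; intros; rewrite ren_as_subst; reflexivity.
Qed.

Definition bump (k i : nat) : nat := if Nat.ltb i k then i else S i.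
Lemma ltb_SS : forall j k, (S j <? S k) = (j <? k). Proof. reflexivity. Qed.

Lemma Tr_lift_l :
  (forall t k rho sg S, Tr (lift_l k t) rho sg S = Tr t (fun i => rho (bump k i)) sg S) /\
  (forall c k rho sg, TrC (lift_l_c k c) rho sg = TrC c (fun i => rho (bump k i)) sg).
Proof.
  apply (tm_cmd_ind
    (fun t => forall k rho sg S, Tr (lift_l k t) rho sg S = Tr t (fun i => rho (bump k i)) sg S)
    (fun c => forall k rho sg, TrC (lift_l_c k c) rho sg = TrC c (fun i => rho (bump k i)) sg));
  intros; simpl.
  - unfold bump. destruct (n <? k); reflexivity.
  - rewrite H. do 4 f_equal. apply functional_extensionality; intros [|j]; simpl; auto.
    unfold bump, shf; simpl; rewrite ?ltb_SS; destruct (j <? k); reflexivity.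
  - rewrite H, H0. reflexivity.
  - rewrite H. reflexivity.
  - reflexivity.
  - rewrite H. reflexivity.
  - rewrite H, H0, H1. reflexivity.
  - rewrite H. reflexivity.
Qed.

Lemma Tr_lift_m :
  (forall t k rho sg S, Tr (lift_m k t) rho sg S = Tr t rho (fun i => sg (bump k i)) S) /\
  (forall c k rho sg, TrC (lift_m_c k c) rho sg = TrC c rho (fun i => sg (bump k i))).
Proof.
  apply (tm_cmd_ind
    (fun t => forall k rho sg S, Tr (lift_m k t) rho sg S = Tr t rho (fun i => sg (bump k i)) S)
    (fun c => forall k rho sg, TrC (lift_m_c k c) rho sg = TrC c rho (fun i => sg (bump k i))));
  intros; simpl.
  - reflexivity.
  - rewrite H. reflexivity.
  - rewrite H, H0. reflexivity.
  - rewrite H. f_equal. apply functional_extensionality; intros [|j]; simpl; auto.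
    unfold bump, shf; simpl; rewrite ?ltb_SS; destruct (j <? k); reflexivity.
  - reflexivity.
  - rewrite H. reflexivity.
  - rewrite H, H0, H1. reflexivity.
  - rewrite H. reflexivity.
Qed.

Lemma Tr_ren_m :
  (forall t f rho sg S, Tr (ren_m f t) rho sg S = Tr t rho (fun i => sg (f i)) S) /\
  (forall c f rho sg, TrC (ren_m_c f c) rho sg = TrC c rho (fun i => sg (f i))).
Proof.
  apply (tm_cmd_ind
    (fun t => forall f rho sg S, Tr (ren_m f t) rho sg S = Tr t rho (fun i => sg (f i)) S)
    (fun c => forall f rho sg, TrC (ren_m_c f c) rho sg = TrC c rho (fun i => sg (f i))));
  intros; simpl.
  - reflexivity.
  - rewrite H. reflexivity.
  - rewrite H, H0. reflexivity.
  - rewrite H. f_equal. apply functional_extensionality; intros [|j]; simpl; auto.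
  - reflexivity.
  - rewrite H. reflexivity.
  - rewrite H, H0, H1. reflexivity.
  - rewrite H. reflexivity.
Qed.

(* stack transformer of an evaluation context *)
Fixpoint Kf (E : ectx) (rho sg : nat -> U) (S : U) : U :=
  match E with
  | Hole => S
  | EApp E' t => Kf E' rho sg (upair (val t rho sg) S)
  | ESuc E' => Kf E' rho sg (usk S)
  | ENrec _ r s E' => Kf E' rho sg (unk (val r rho sg) (Gof s rho sg) S)
  end.

Lemma Tr_plug : forall E u rho sg S, Tr (plug E u) rho sg S = Tr u rho sg (Kf E rho sg S).
Proof. induction E; intros; simpl; auto; rewrite IHE; reflexivity. Qed.

Lemma Kf_lift_l : forall E k rho sg S, Kf (lift_l_e k E) rho sg S = Kf E (fun i => rho (bump k i)) sg S.
Proof.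
  induction E; intros; simpl; auto; rewrite IHE; unfold val, Gof;
  rewrite ?(proj1 Tr_lift_l); reflexivity.
Qed.

Lemma Kf_lift_m : forall E k rho sg S, Kf (lift_m_e k E) rho sg S = Kf E rho (fun i => sg (bump k i)) S.
Proof.
  induction E; intros; simpl; auto; rewrite IHE; unfold val, Gof;
  rewrite ?(proj1 Tr_lift_m); reflexivity.
Qed.

Lemma Kf_subst : forall E th rho sg S, subst th (Kf E rho sg S) =
  Kf E (fun n => subst th (rho n)) (fun n => subst th (sg n)) (subst th S).
Proof.
  induction E; intros; simpl; auto; rewrite IHE;
  rewrite ?subst_upair, ?subst_usk, ?subst_unk, ?subst_val, ?subst_Gof; reflexivity.
Qed.

Lemma Kf_ren : forall E xi rho sg S, ren xi (Kf E rho sg S) =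
  Kf E (fun n => ren xi (rho n)) (fun n => ren xi (sg n)) (ren xi S).
Proof.
  intros. rewrite !ren_as_subst, Kf_subst.
  f_equal; apply functional_extensionality; intros; rewrite ren_as_subst; reflexivity.
Qed.

Definition upd (sg : nat -> U) (k : nat) (v : U) : nat -> U :=
  fun i => if Nat.eqb i k then v else sg i.

Lemma upd_shf : forall E rho sg k,
  upd (shf sg) k (Kf E (shf rho) (shf sg) (shf sg k)) = shf (upd sg k (Kf E rho sg (sg k))).
Proof.
  intros. apply functional_extensionality; intros j. unfold upd, shf.
  destruct (j =? k); auto. rewrite Kf_ren. reflexivity.
Qed.

Lemma scons_bump0 : forall {X} (x : X) f, (fun i => scons x f (bump 0 i)) = f.
Proof. intros. apply functional_extensionality; intros i. reflexivity. Qed.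

Lemma Tr_sstruct :
  (forall t k E rho sg S, Tr (sstruct k E t) rho sg S =
     Tr t rho (upd sg k (Kf E rho sg (sg k))) S) /\
  (forall c k E rho sg, TrC (sstruct_c k E c) rho sg =
     TrC c rho (upd sg k (Kf E rho sg (sg k)))).
Proof.
  apply (tm_cmd_ind
    (fun t => forall k E rho sg S, Tr (sstruct k E t) rho sg S =
     Tr t rho (upd sg k (Kf E rho sg (sg k))) S)
    (fun c => forall k E rho sg, TrC (sstruct_c k E c) rho sg =
     TrC c rho (upd sg k (Kf E rho sg (sg k))))); intros; simpl.
  - reflexivity.
  - rewrite H, Kf_lift_l, scons_bump0, !upd_shf. reflexivity.
  - rewrite H, H0, upd_shf. reflexivity.
  - rewrite H. f_equal. apply functional_extensionality; intros [|j]; unfold upd; simpl; auto.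
    destruct (j =? k); auto. rewrite Kf_lift_m. f_equal.
  - reflexivity.
  - rewrite H. reflexivity.
  - rewrite H, H0, H1, !upd_shf. reflexivity.
  - destruct (Nat.eqb_spec n k).
    + subst. simpl. rewrite Tr_plug, H. unfold upd at 3. rewrite Nat.eqb_refl. reflexivity.
    + simpl. rewrite H. unfold upd at 3. apply Nat.eqb_neq in n0. rewrite n0. reflexivity.
Qed.

Definition penv (f g : nat -> U) := forall n, uconv (f n) (g n).

Lemma penv_shf : forall f g, penv f g -> penv (shf f) (shf g).
Proof. unfold penv, shf; intros; apply uconv_ren; auto. Qed.
Lemma penv_scons : forall a b f g, uconv a b -> penv f g -> penv (scons a f) (scons b g).
Proof. unfold penv; intros a b f g H H0 [|n]; simpl; auto. Qed.
Lemma penv_refl : forall f, penv f f. Proof. unfold penv; intros; apply uconv_refl. Qed.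

Lemma uconv_upair : forall a a' S S', uconv a a' -> uconv S S' -> uconv (upair a S) (upair a' S').
Proof. intros; unfold upair; auto 10 using uconv_lam, uconv_app, uconv_ren, uconv_refl. Qed.
Lemma uconv_usk : forall S S', uconv S S' -> uconv (usk S) (usk S').
Proof. intros; unfold usk; auto 10 using uconv_lam, uconv_app, uconv_ren, uconv_refl. Qed.
Lemma uconv_unk : forall a a' b b' S S', uconv a a' -> uconv b b' -> uconv S S' ->
  uconv (unk a b S) (unk a' b' S').
Proof. intros; unfold unk; auto 10 using uconv_lam, uconv_app, uconv_ren, uconv_refl, uconv_nrec. Qed.

Lemma Tr_cong :
  (forall t rho rho' sg sg' S S', penv rho rho' -> penv sg sg' -> uconv S S' ->
     uconv (Tr t rho sg S) (Tr t rho' sg' S')) /\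
  (forall c rho rho' sg sg', penv rho rho' -> penv sg sg' ->
     uconv (TrC c rho sg) (TrC c rho' sg')).
Proof.
  apply (tm_cmd_ind
    (fun t => forall rho rho' sg sg' S S', penv rho rho' -> penv sg sg' -> uconv S S' ->
     uconv (Tr t rho sg S) (Tr t rho' sg' S'))
    (fun c => forall rho rho' sg sg', penv rho rho' -> penv sg sg' ->
     uconv (TrC c rho sg) (TrC c rho' sg'))); intros; simpl.
  - apply uconv_app; auto.
  - apply uconv_app; auto. apply uconv_lam, uconv_lam. apply H;
    auto using penv_scons, penv_shf, uconv_refl.
  - apply H; auto. apply uconv_upair; auto. apply uconv_lam, H0; auto using penv_shf, uconv_refl.
  - apply H; auto using penv_scons.
  - apply uconv_app; auto using uconv_refl.
  - apply H; auto using uconv_usk.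
  - apply H1; auto. apply uconv_unk; auto.
    + apply uconv_lam, H; auto using penv_shf, uconv_refl.
    + apply uconv_lam, uconv_lam, uconv_lam, H0; auto using penv_shf, uconv_refl.
  - apply H; auto.
Qed.

Lemma Tr_cong_S : forall t rho sg S S', uconv S S' -> uconv (Tr t rho sg S) (Tr t rho sg S').
Proof. intros; apply Tr_cong; auto using penv_refl. Qed.

Definition senv (k : nat) (v : U) (rho : nat -> U) : nat -> U :=
  fun i => if Nat.ltb i k then rho i else if Nat.eqb i k then v else rho (pred i).

Lemma senv_scons : forall k v x f, senv (S k) v (scons x f) = scons x (senv k v f).
Proof.
  intros. apply functional_extensionality; intros [|j]; unfold senv; simpl; auto.
  rewrite ltb_SS. destruct (j <? k) eqn:E1; auto.
  destruct (j =? k) eqn:E2; auto. destruct j; auto.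
  apply Nat.ltb_ge in E1. apply Nat.eqb_neq in E2. lia.
Qed.

Lemma senv_shf : forall k v f, senv k (sh v) (shf f) = shf (senv k v f).
Proof.
  intros. apply functional_extensionality; intros j; unfold senv, shf.
  destruct (j <? k); auto. destruct (j =? k); auto.
Qed.

Lemma senv0 : forall v f, senv 0 v f = scons v f.
Proof. intros. apply functional_extensionality; intros [|j]; reflexivity. Qed.

Lemma val_lift_l0 : forall r x rho sg, val (lift_l 0 r) (scons x rho) sg = val r rho sg.
Proof. intros. unfold val. rewrite (proj1 Tr_lift_l). reflexivity. Qed.
Lemma val_lift_m0 : forall r x rho sg, val (lift_m 0 r) rho (scons x sg) = val r rho sg.
Proof. intros. unfold val. rewrite (proj1 Tr_lift_m). reflexivity. Qed.
Lemma Gof_lift_m0 : forall r x rho sg, Gof (lift_m 0 r) rho (scons x sg) = Gof r rho sg.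
Proof. intros. unfold Gof. rewrite (proj1 Tr_lift_m). reflexivity. Qed.

Lemma val_shf : forall t rho sg, val t (shf rho) (shf sg) = sh (val t rho sg).
Proof. intros. rewrite ren_val. reflexivity. Qed.

Lemma val_cong' : forall a b rho sg rho' sg',
  uconv (Tr a (shf rho) (shf sg) (UVar 0)) (Tr b (shf rho') (shf sg') (UVar 0)) ->
  uconv (val a rho sg) (val b rho' sg').
Proof. intros; unfold val; apply uconv_lam; auto. Qed.
Lemma Gof_cong' : forall a b rho sg rho' sg',
  uconv (Tr a (shf (shf (shf rho))) (shf (shf (shf sg))) gstack)
        (Tr b (shf (shf (shf rho'))) (shf (shf (shf sg'))) gstack) ->
  uconv (Gof a rho sg) (Gof b rho' sg').
Proof. intros; unfold Gof; apply uconv_lam, uconv_lam, uconv_lam; auto. Qed.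

Lemma penv_senv : forall k v v' rho, uconv v v' -> penv (senv k v rho) (senv k v' rho).
Proof.
  unfold penv, senv; intros. destruct (n <? k); auto using uconv_refl.
  destruct (n =? k); auto using uconv_refl.
Qed.

Lemma Tr_subst_l :
  (forall t k r rho sg S, uconv (Tr (subst_l k r t) rho sg S)
     (Tr t (senv k (val r rho sg) rho) sg S)) /\
  (forall c k r rho sg, uconv (TrC (subst_l_c k r c) rho sg)
     (TrC c (senv k (val r rho sg) rho) sg)).
Proof.
  apply (tm_cmd_ind
    (fun t => forall k r rho sg S, uconv (Tr (subst_l k r t) rho sg S)
     (Tr t (senv k (val r rho sg) rho) sg S))
    (fun c => forall k r rho sg, uconv (TrC (subst_l_c k r c) rho sg)
     (TrC c (senv k (val r rho sg) rho) sg))); intros; simpl.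
  - unfold senv. destruct (n <? k) eqn:E1; simpl; [apply uconv_refl|].
    destruct (n =? k) eqn:E2; simpl; [|apply uconv_refl].
    apply uconv_sym, uconv_step, val_beta.
  - apply uconv_app; [apply uconv_refl|]. apply uconv_lam, uconv_lam.
    eapply uconv_trans; [apply H|].
    rewrite val_lift_l0, !val_shf, senv_scons, !senv_shf. apply uconv_refl.
  - eapply uconv_trans; [apply H|]. apply Tr_cong_S, uconv_upair; [|apply uconv_refl].
    apply val_cong'. eapply uconv_trans; [apply H0|].
    rewrite val_shf, senv_shf. apply uconv_refl.
  - eapply uconv_trans; [apply H|]. rewrite val_lift_m0. apply uconv_refl.
  - apply uconv_refl.
  - apply H.
  - eapply uconv_trans; [apply H1|]. apply Tr_cong_S, uconv_unk; [| |apply uconv_refl].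
    + apply val_cong'. eapply uconv_trans; [apply H|].
      rewrite val_shf, senv_shf. apply uconv_refl.
    + apply Gof_cong'. eapply uconv_trans; [apply H0|].
      rewrite !val_shf, !senv_shf. apply uconv_refl.
  - apply H.
Qed.

Fixpoint unum (n : nat) : U := match n with 0 => UZero | S m => USuc (unum m) end.

Lemma subst_unum : forall n th, subst th (unum n) = unum n.
Proof. induction n; simpl; intros; auto. rewrite IHn; auto. Qed.
Lemma ren_unum : forall n xi, ren xi (unum n) = unum n.
Proof. intros. rewrite ren_as_subst. apply subst_unum. Qed.

Lemma ubeta : forall b a, uconv (UApp (ULam b) a) (subst (scons a UVar) b).
Proof. intros; apply uconv_step; constructor. Qed.

Lemma subst_scons_up : forall B c th' th,
  subst (scons c th') (subst (up th) B) = subst (scons c (fun n => subst th' (th n))) B.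
Proof.
  intros. rewrite subst_subst. apply subst_ext. intros [|n]; simpl; auto.
  apply subst_scons_sh.
Qed.



Lemma uconv_eq : forall a b, a = b -> uconv a b. Proof. intros; subst; apply uconv_refl. Qed.

Lemma ubeta2 : forall B a b, uconv (UApp (UApp (ULam (ULam B)) a) b)
   (subst (scons b (scons a UVar)) B).
Proof.
  intros. eapply uconv_trans. apply uconv_app; [apply ubeta|apply uconv_refl]. simpl.
  eapply uconv_trans. apply ubeta. rewrite subst_scons_up. apply uconv_eq.
  apply subst_ext. intros [|[|n]]; simpl; auto. apply subst_id.
Qed.

Lemma ubeta3 : forall B a b c, uconv (UApp (UApp (UApp (ULam (ULam (ULam B))) a) b) c)
   (subst (scons c (scons b (scons a UVar))) B).
Proof.
  intros. eapply uconv_trans. apply uconv_app; [apply uconv_app; [apply ubeta|apply uconv_refl]|apply uconv_refl].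
  simpl. eapply uconv_trans. apply ubeta2. rewrite subst_scons_up. apply uconv_eq.
  apply subst_ext. intros [|[|[|n]]]; simpl; auto.
  all: repeat (rewrite ?subst_scons_sh, ?subst_beta_sh, ?subst_id; simpl); auto.
Qed.

Lemma subst_sh2 : forall x a b th, subst (scons a (scons b th)) (sh (sh x)) = subst th x.
Proof. intros. rewrite !subst_scons_sh. reflexivity. Qed.
Lemma subst_sh3 : forall x a b c th, subst (scons a (scons b (scons c th))) (sh (sh (sh x))) = subst th x.
Proof. intros. rewrite !subst_scons_sh. reflexivity. Qed.

Lemma usk_beta : forall S x, uconv (UApp (usk S) x) (UApp S (USuc x)).
Proof. intros. unfold usk. eapply uconv_trans. apply ubeta. simpl. rewrite subst_beta_sh. apply uconv_refl. Qed.
Lemma unk_beta : forall a b S x, uconv (UApp (unk a b S) x) (UApp (UNrec a b x) S).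
Proof. intros. unfold unk. eapply uconv_trans. apply ubeta. simpl. rewrite !subst_beta_sh. apply uconv_refl. Qed.

Lemma upair_beta : forall a S f, uconv (UApp (upair a S) f) (UApp (UApp f a) S).
Proof. intros. unfold upair. eapply uconv_trans. apply ubeta. simpl. rewrite !subst_beta_sh. apply uconv_refl. Qed.

Lemma Tr_Suc : forall a rho sg S, Tr (Suc a) rho sg S = Tr a rho sg (usk S).
Proof. reflexivity. Qed.

Lemma Tr_num : forall n rho sg S, uconv (Tr (num n) rho sg S) (UApp S (unum n)).
Proof.
  induction n; intros; simpl. apply uconv_refl.
  eapply uconv_trans. apply IHn. apply usk_beta.
Qed.

Lemma Gof_shf : forall t rho sg, Gof t (shf rho) (shf sg) = sh (Gof t rho sg).
Proof. intros. rewrite ren_Gof. reflexivity. Qed.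

Lemma scons_ext : forall {X} (x : X) f g, (forall n, f n = g n) -> scons x f = scons x g.
Proof. intros. f_equal. apply functional_extensionality; auto. Qed.

Scheme step_ind2 := Induction for step Sort Prop
with step_c_ind2 := Induction for step_c Sort Prop.
Combined Scheme step_mut_ind from step_ind2, step_c_ind2.

Lemma Tr_step :
  (forall u v, step u v -> forall rho sg S, uconv (Tr u rho sg S) (Tr v rho sg S)) /\
  (forall c c', step_c c c' -> forall rho sg, uconv (TrC c rho sg) (TrC c' rho sg)).
Proof.
  apply (step_mut_ind
    (fun u v _ => forall rho sg S, uconv (Tr u rho sg S) (Tr v rho sg S))
    (fun c c' _ => forall rho sg, uconv (TrC c rho sg) (TrC c' rho sg))); intros.
  -
    simpl. eapply uconv_trans. apply upair_beta.
    eapply uconv_trans. apply ubeta2.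
    eapply uconv_trans; [| apply uconv_sym, (proj1 Tr_subst_l)].
    rewrite senv0, (proj1 Tr_subst). apply uconv_eq. f_equal.
    + apply functional_extensionality; intros [|n]; simpl; auto. unfold shf. rewrite subst_sh2; apply subst_id.
    + apply functional_extensionality; intros n. unfold shf. rewrite subst_sh2. apply subst_id.
  -
    simpl. rewrite (proj2 Tr_sstruct). apply uconv_eq. f_equal.
    apply functional_extensionality; intros [|n]; reflexivity.
  -
    rewrite Tr_App. simpl. rewrite (proj2 Tr_sstruct). apply uconv_eq. f_equal.
    apply functional_extensionality; intros [|n]; simpl; auto. rewrite val_lift_m0. reflexivity.
  -
    simpl. rewrite (proj1 Tr_lift_m), scons_bump0. apply uconv_refl.
  -
    rewrite Tr_Nrec. simpl. eapply uconv_trans. apply unk_beta.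
    eapply uconv_trans. apply uconv_app; [apply uconv_step; constructor|apply uconv_refl].
    apply uconv_step, val_beta.
  -
    rewrite Tr_Nrec, Tr_Suc. eapply uconv_trans. apply Tr_num.
    eapply uconv_trans. apply usk_beta.
    eapply uconv_trans. apply unk_beta.
    eapply uconv_trans. apply uconv_app; [apply uconv_step; constructor|apply uconv_refl].
    unfold Gof at 1. eapply uconv_trans. apply ubeta3.
    rewrite (proj1 Tr_subst). unfold gstack. rewrite !subst_upair, subst_uret, subst_ueta. cbn [subst scons].
    rewrite !Tr_App.
    apply Tr_cong.
    + intros n'. unfold shf. rewrite subst_sh3, subst_id. apply uconv_refl.
    + intros n'. unfold shf. rewrite subst_sh3, subst_id. apply uconv_refl.
    + apply uconv_sym, uconv_upair; [|apply uconv_upair; [|apply uconv_refl]].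
      * unfold val. eapply uconv_trans. apply uconv_lam, Tr_num. unfold uret.
        rewrite ren_unum. apply uconv_refl.
      * unfold val. rewrite Tr_Nrec. eapply uconv_trans. apply uconv_lam, Tr_num.
        unfold ueta. apply uconv_lam. eapply uconv_trans. apply unk_beta.
        rewrite val_shf, Gof_shf. simpl. rewrite ren_unum. apply uconv_refl.
  -
    rewrite Tr_Nrec. simpl. rewrite (proj2 Tr_sstruct). apply uconv_eq. f_equal.
    apply functional_extensionality; intros [|n]; simpl; auto.
    rewrite val_lift_m0, Gof_lift_m0. reflexivity.
  - simpl. apply uconv_app; [apply uconv_refl|]. apply uconv_lam, uconv_lam. auto.
  - rewrite !Tr_App. auto.
  - rewrite !Tr_App. apply Tr_cong_S, uconv_upair; [|apply uconv_refl].
    unfold val; apply uconv_lam; auto.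
  - simpl. auto.
  - simpl. auto.
  - rewrite !Tr_Nrec. apply Tr_cong_S, uconv_unk; try apply uconv_refl.
    unfold val; apply uconv_lam; auto.
  - rewrite !Tr_Nrec. apply Tr_cong_S, uconv_unk; try apply uconv_refl.
    unfold Gof; apply uconv_lam, uconv_lam, uconv_lam; auto.
  - rewrite !Tr_Nrec. auto.
  -
    simpl. rewrite (proj2 Tr_ren_m). apply uconv_eq. f_equal.
    apply functional_extensionality; intros [|n]; reflexivity.
  - simpl. auto.
Qed.

Lemma Tr_conv : forall u v, conv u v -> forall rho sg S, uconv (Tr u rho sg S) (Tr v rho sg S).
Proof.
  intros u v H; induction H; intros.
  - apply Tr_step; auto.
  - apply uconv_refl.
  - apply uconv_sym; auto.
  - eapply uconv_trans; eauto.
Qed.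

Fixpoint stt (A : ty) : ty :=
  match A with
  | TN => TArr TN TN
  | TArr A B => TArr (TArr (TArr (stt A) TN) (TArr (stt B) TN)) TN
  end.
Definition trt (A : ty) : ty := TArr (stt A) TN.

Fixpoint erase (t : Ttm) : U :=
  match t with
  | TVar n => UVar n
  | TLam _ b => ULam (erase b)
  | TApp a b => UApp (erase a) (erase b)
  | TZero => UZero
  | TSuc a => USuc (erase a)
  | TNrec _ a b c => UNrec (erase a) (erase b) (erase c)
  end.

Lemma erase_lift : forall t k, erase (Tlift k t) = ren (bump k) (erase t).
Proof.
  induction t; intros; simpl; try rewrite IHt; try rewrite IHt1; try rewrite IHt2;
  try rewrite IHt3; auto.
  - unfold bump. destruct (n <? k); auto.
  - f_equal. f_equal. apply functional_extensionality; intros [|j]; unfold upr, bump; simpl; auto.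
    rewrite ltb_SS. destruct (j <? k); auto.
Qed.

Lemma erase_lift0 : forall t, erase (Tlift 0 t) = sh (erase t).
Proof. intros. rewrite erase_lift. reflexivity. Qed.

Fixpoint Tren (xi : nat -> nat) (t : Ttm) : Ttm :=
  match t with
  | TVar n => TVar (xi n)
  | TLam A b => TLam A (Tren (upr xi) b)
  | TApp a b => TApp (Tren xi a) (Tren xi b)
  | TZero => TZero
  | TSuc a => TSuc (Tren xi a)
  | TNrec A a b c => TNrec A (Tren xi a) (Tren xi b) (Tren xi c)
  end.

Lemma Tlift_ren : forall t k, Tlift k t = Tren (bump k) t.
Proof.
  induction t; intros; simpl; try rewrite IHt; try rewrite IHt1; try rewrite IHt2;
  try rewrite IHt3; auto.
  - unfold bump. destruct (n <? k); auto.
  - f_equal. f_equal. apply functional_extensionality; intros [|j]; unfold upr, bump; simpl; auto.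
    rewrite ltb_SS. destruct (j <? k); auto.
Qed.

Lemma Tren_typing : forall G t A, Thas_type G t A -> forall xi G',
  (forall x B, nth_error G x = Some B -> nth_error G' (xi x) = Some B) ->
  Thas_type G' (Tren xi t) A.
Proof.
  induction 1; intros; simpl; econstructor; eauto.
  apply IHThas_type. intros [|x] B' H1; simpl in *; auto.
Qed.

Lemma Tweak : forall G t A X, Thas_type G t A -> Thas_type (X :: G) (Tlift 0 t) A.
Proof.
  intros. rewrite Tlift_ren. eapply Tren_typing; eauto.
Qed.

Definition apair A B a S := TLam (TArr (trt A) (TArr (stt B) TN))
   (TApp (TApp (TVar 0) (Tlift 0 a)) (Tlift 0 S)).
Definition ask S := TLam TN (TApp (Tlift 0 S) (TSuc (TVar 0))).
Definition aret x := TLam (stt TN) (TApp (TVar 0) (Tlift 0 x)).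
Definition aeta A x := TLam (stt A) (TApp (Tlift 0 x) (TVar 0)).
Definition ank A vr g S := TLam TN (TApp (TNrec (trt A) (Tlift 0 vr) (Tlift 0 g) (TVar 0)) (Tlift 0 S)).
Definition agstack A := apair TN (TArr A A) (aret (TVar 2)) (apair A A (aeta A (TVar 1)) (TVar 0)).

Lemma apair_ty : forall G A B a S, Thas_type G a (trt A) -> Thas_type G S (stt B) ->
  Thas_type G (apair A B a S) (stt (TArr A B)).
Proof.
  intros. unfold apair. simpl. constructor. econstructor. econstructor.
  constructor; reflexivity. apply Tweak; eauto. apply Tweak; eauto.
Qed.
Lemma ask_ty : forall G S, Thas_type G S (stt TN) -> Thas_type G (ask S) (stt TN).
Proof.
  intros. unfold ask. simpl. constructor. econstructor. apply Tweak; eauto.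
  constructor. constructor; reflexivity.
Qed.
Lemma aret_ty : forall G x, Thas_type G x TN -> Thas_type G (aret x) (trt TN).
Proof.
  intros. unfold aret, trt. simpl. constructor. econstructor. constructor; reflexivity.
  apply Tweak; eauto.
Qed.
Lemma aeta_ty : forall G A x, Thas_type G x (trt A) -> Thas_type G (aeta A x) (trt A).
Proof.
  intros. unfold aeta, trt in *. constructor. econstructor. apply Tweak; eauto.
  constructor; reflexivity.
Qed.
Lemma ank_ty : forall G A vr g S, Thas_type G vr (trt A) ->
  Thas_type G g (TArr TN (TArr (trt A) (trt A))) -> Thas_type G S (stt A) ->
  Thas_type G (ank A vr g S) (stt TN).
Proof.
  intros. unfold ank. simpl. constructor. econstructor.
  constructor. apply Tweak; eauto. apply Tweak; eauto. constructor; reflexivity.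
  apply Tweak; eauto.
Qed.
Lemma agstack_ty : forall G A, Thas_type (stt A :: trt A :: TN :: G) (agstack A) (stt (TArr TN (TArr A A))).
Proof.
  intros. unfold agstack. apply apair_ty.
  apply aret_ty. constructor; reflexivity.
  apply apair_ty. apply aeta_ty. constructor; reflexivity. constructor; reflexivity.
Qed.

Lemma erase_apair : forall A B a S, erase (apair A B a S) = upair (erase a) (erase S).
Proof. intros. unfold apair. simpl. rewrite !erase_lift0. reflexivity. Qed.
Lemma erase_ask : forall S, erase (ask S) = usk (erase S).
Proof. intros. unfold ask. simpl. rewrite !erase_lift0. reflexivity. Qed.
Lemma erase_aret : forall S, erase (aret S) = uret (erase S).
Proof. intros. unfold aret. simpl. rewrite !erase_lift0. reflexivity. Qed.
Lemma erase_aeta : forall A S, erase (aeta A S) = ueta (erase S).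
Proof. intros. unfold aeta. simpl. rewrite !erase_lift0. reflexivity. Qed.
Lemma erase_ank : forall A a b S, erase (ank A a b S) = unk (erase a) (erase b) (erase S).
Proof. intros. unfold ank. simpl. rewrite !erase_lift0. reflexivity. Qed.
Lemma erase_agstack : forall A, erase (agstack A) = gstack.
Proof. intros. unfold agstack. rewrite !erase_apair, erase_aret, erase_aeta. reflexivity. Qed.

Scheme has_type_ind2 := Induction for has_type Sort Prop
with has_type_c_ind2 := Induction for has_type_c Sort Prop.
Combined Scheme has_type_mut_ind from has_type_ind2, has_type_c_ind2.

Definition tshf (f : nat -> Ttm) : nat -> Ttm := fun n => Tlift 0 (f n).

Lemma erase_tshf : forall f, (fun n => erase (tshf f n)) = shf (fun n => erase (f n)).
Proof. intros. apply functional_extensionality; intros. unfold tshf, shf. apply erase_lift0. Qed.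

Lemma env_tshf : forall G Gam (f : nat -> Ttm) X,
  (forall x B, nth_error Gam x = Some B -> Thas_type G (f x) (trt B)) ->
  (forall x B, nth_error Gam x = Some B -> Thas_type (X :: G) (tshf f x) (trt B)).
Proof. intros. unfold tshf. apply Tweak; eauto. Qed.
Lemma env_tshf' : forall G Gam (f : nat -> Ttm) X,
  (forall x B, nth_error Gam x = Some B -> Thas_type G (f x) (stt B)) ->
  (forall x B, nth_error Gam x = Some B -> Thas_type (X :: G) (tshf f x) (stt B)).
Proof. intros. unfold tshf. apply Tweak; eauto. Qed.

Definition envok0 := 0.
Definition envok G Gam (f : nat -> Ttm) := forall x B, nth_error Gam x = Some B -> Thas_type G (f x) (trt B).
Definition senvok G Gam (f : nat -> Ttm) := forall x B, nth_error Gam x = Some B -> Thas_type G (f x) (stt B).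

Lemma envok_tshf : forall TG Gam f X, envok TG Gam f -> envok (X :: TG) Gam (tshf f).
Proof. unfold envok, tshf; intros; apply Tweak; eauto. Qed.
Lemma senvok_tshf : forall TG Gam f X, senvok TG Gam f -> senvok (X :: TG) Gam (tshf f).
Proof. unfold senvok, tshf; intros; apply Tweak; eauto. Qed.

Lemma Tr_typed :
  (forall Gam Del t A, has_type Gam Del t A -> forall TG ra sa Sa,
     envok TG Gam ra -> senvok TG Del sa -> Thas_type TG Sa (stt A) ->
     exists w, Thas_type TG w TN /\
       erase w = Tr t (fun n => erase (ra n)) (fun n => erase (sa n)) (erase Sa)) /\
  (forall Gam Del c, has_type_c Gam Del c -> forall TG ra sa,
     envok TG Gam ra -> senvok TG Del sa ->
     exists w, Thas_type TG w TN /\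
       erase w = TrC c (fun n => erase (ra n)) (fun n => erase (sa n))).
Proof.
  apply (has_type_mut_ind
    (fun Gam Del t A _ => forall TG ra sa Sa,
     envok TG Gam ra -> senvok TG Del sa -> Thas_type TG Sa (stt A) ->
     exists w, Thas_type TG w TN /\
       erase w = Tr t (fun n => erase (ra n)) (fun n => erase (sa n)) (erase Sa))
    (fun Gam Del c _ => forall TG ra sa,
     envok TG Gam ra -> senvok TG Del sa ->
     exists w, Thas_type TG w TN /\
       erase w = TrC c (fun n => erase (ra n)) (fun n => erase (sa n)))); intros.
  -
    exists (TApp (ra x) Sa). split; [|reflexivity]. econstructor; [apply H; eauto|eauto].
  -
    destruct (H (stt B :: trt A :: TG) (scons (TVar 1) (tshf (tshf ra))) (tshf (tshf sa)) (TVar 0))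
      as [w [Hw Ew]].
    + intros [|x] B' Hx; simpl in *.
      * inversion Hx; subst. constructor; reflexivity.
      * unfold tshf. do 2 apply Tweak. apply H0; auto.
    + do 2 apply senvok_tshf; auto.
    + constructor; reflexivity.
    + exists (TApp Sa (TLam (trt A) (TLam (stt B) w))). split.
      * econstructor; eauto. constructor. constructor. auto.
      * simpl. rewrite Ew. do 4 f_equal.
        -- apply functional_extensionality; intros [|x]; simpl; auto.
           unfold tshf, shf. rewrite !erase_lift0. reflexivity.
        -- rewrite !erase_tshf. reflexivity.
  -
    destruct (H0 (stt A :: TG) (tshf ra) (tshf sa) (TVar 0)) as [ws [Hs Es]];
      auto using envok_tshf, senvok_tshf. constructor; reflexivity.
    destruct (H TG ra sa (apair A B (TLam (stt A) ws) Sa)) as [w [Hw Ew]]; auto.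
    apply apair_ty; auto. constructor; auto.
    exists w. split; auto. rewrite Ew, erase_apair. simpl. rewrite Es, !erase_tshf. reflexivity.
  -
    exists (TApp Sa TZero). split. econstructor; eauto. constructor. reflexivity.
  -
    destruct (H TG ra sa (ask Sa)) as [w [Hw Ew]]; auto. apply ask_ty; auto.
    exists w. split; auto. rewrite Ew, erase_ask. reflexivity.
  -
    destruct (H (stt A :: TG) (tshf ra) (tshf sa) (TVar 0)) as [wr [Hr Er]];
      auto using envok_tshf, senvok_tshf. constructor; reflexivity.
    destruct (H0 (stt A :: trt A :: TN :: TG) (tshf (tshf (tshf ra))) (tshf (tshf (tshf sa))) (agstack A))
      as [ws [Hs Es]].
    + do 3 apply envok_tshf; auto.
    + do 3 apply senvok_tshf; auto.
    + apply agstack_ty.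
    + destruct (H1 TG ra sa (ank A (TLam (stt A) wr) (TLam TN (TLam (trt A) (TLam (stt A) ws))) Sa))
        as [w [Hw Ew]]; auto.
      * apply ank_ty; auto. constructor; auto. constructor. constructor. constructor. auto.
      * exists w. split; auto. rewrite Ew, erase_ank. rewrite Tr_Nrec. simpl. rewrite Er, Es.
        rewrite erase_agstack, !erase_tshf. reflexivity.
  -
    destruct (H TG ra (scons Sa sa)) as [w [Hw Ew]]; auto.
    + intros [|x] B Hx; simpl in *; auto. inversion Hx; subst; auto.
    + exists w. split; auto. rewrite Ew. simpl. f_equal.
      apply functional_extensionality; intros [|x]; reflexivity.
  -
    destruct (H TG ra sa (sa a)) as [w [Hw Ew]]; auto.
    exists w. split; auto.
Qed.

Inductive par : U -> U -> Prop :=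
| p_var n : par (UVar n) (UVar n)
| p_lam b b' : par b b' -> par (ULam b) (ULam b')
| p_app a a' b b' : par a a' -> par b b' -> par (UApp a b) (UApp a' b')
| p_zero : par UZero UZero
| p_suc a a' : par a a' -> par (USuc a) (USuc a')
| p_nrec a a' b b' c c' : par a a' -> par b b' -> par c c' -> par (UNrec a b c) (UNrec a' b' c')
| p_beta b b' a a' : par b b' -> par a a' -> par (UApp (ULam b) a) (subst (scons a' UVar) b')
| p_nrec0 r r' s : par r r' -> par (UNrec r s UZero) r'
| p_nrecS r r' s s' t t' : par r r' -> par s s' -> par t t' ->
    par (UNrec r s (USuc t)) (UApp (UApp s' t') (UNrec r' s' t')).

Lemma par_refl : forall t, par t t.
Proof. induction t; constructor; auto. Qed.

Lemma ren_beta : forall xi a b, ren xi (subst (scons a UVar) b) = subst (scons (ren xi a) UVar) (ren (upr xi) b).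
Proof.
  intros. rewrite ren_subst, subst_ren. apply subst_ext. intros [|n]; reflexivity.
Qed.

Lemma subst_beta : forall th a b, subst th (subst (scons a UVar) b) = subst (scons (subst th a) UVar) (subst (up th) b).
Proof.
  intros. rewrite !subst_subst. apply subst_ext. intros [|n]; simpl; auto.
  rewrite subst_beta_sh. reflexivity.
Qed.

Lemma par_ren : forall a b, par a b -> forall xi, par (ren xi a) (ren xi b).
Proof.
  induction 1; intros; simpl; try (constructor; auto; fail).
  - rewrite ren_beta. constructor; auto.
Qed.

Lemma par_subst : forall a b, par a b -> forall th th', (forall n, par (th n) (th' n)) ->
  par (subst th a) (subst th' b).
Proof.
  induction 1; intros; simpl; auto; try (constructor; auto; fail).
  - constructor. apply IHpar. intros [|n]; simpl. constructor. apply par_ren; auto.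
  - rewrite subst_beta. constructor; auto. apply IHpar1. intros [|n]; simpl. constructor. apply par_ren; auto.
Qed.

Fixpoint dev (t : U) : U :=
  match t with
  | UVar n => UVar n
  | ULam b => ULam (dev b)
  | UApp (ULam b) a => subst (scons (dev a) UVar) (dev b)
  | UApp a b => UApp (dev a) (dev b)
  | UZero => UZero
  | USuc a => USuc (dev a)
  | UNrec r s UZero => dev r
  | UNrec r s (USuc t) => UApp (UApp (dev s) (dev t)) (UNrec (dev r) (dev s) (dev t))
  | UNrec r s t => UNrec (dev r) (dev s) (dev t)
  end.

Lemma par_dev : forall t u, par t u -> par u (dev t).
Proof.
  induction 1; simpl; try (constructor; auto; fail).
  - destruct a; try (constructor; auto; fail).
    inversion H; subst. simpl in IHpar1. inversion IHpar1; subst. constructor; auto.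
  - destruct c; try (constructor; auto; fail).
    + inversion H1; subst. constructor; auto.
    + inversion H1; subst. simpl in IHpar3. inversion IHpar3; subst. constructor; auto.
  - apply par_subst; auto. intros [|n]; simpl; auto. constructor.
  - auto.
  - repeat constructor; auto.
Qed.

Definition pstar := clos_refl_trans_1n U par.

Lemma strip : forall t u1 u2, par t u1 -> pstar t u2 -> exists w, pstar u1 w /\ par u2 w.
Proof.
  intros t u1 u2 H1 H2. revert u1 H1. induction H2; intros.
  - exists u1. split. constructor. auto.
  - assert (par u1 (dev x)) by (apply par_dev; auto).
    assert (par y (dev x)) by (apply par_dev; auto).
    destruct (IHclos_refl_trans_1n _ H3) as [w [Hw1 Hw2]].
    exists w. split; auto. econstructor; eauto.
Qed.

Lemma pstar_confl : forall t u1 u2, pstar t u1 -> pstar t u2 -> exists w, pstar u1 w /\ pstar u2 w.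
Proof.
  intros t u1 u2 H1. revert u2. induction H1; intros.
  - exists u2. split; auto. constructor.
  - destruct (strip _ _ _ H H0) as [w [Hw1 Hw2]].
    destruct (IHclos_refl_trans_1n _ Hw1) as [w' [Hw1' Hw2']].
    exists w'. split; auto. econstructor; eauto.
Qed.

Definition ustar := clos_refl_trans U ustep.

Lemma ustar_map : forall (f : U -> U), (forall a b, ustep a b -> ustep (f a) (f b)) ->
  forall a b, ustar a b -> ustar (f a) (f b).
Proof.
  intros f Hf a b H; induction H.
  - apply rt_step; auto.
  - apply rt_refl.
  - eapply rt_trans; eauto.
Qed.

Lemma par_ustar : forall a b, par a b -> ustar a b.
Proof.
  induction 1.
  - apply rt_refl.
  - apply (ustar_map ULam); auto. intros; constructor; auto.
  - eapply rt_trans. apply (ustar_map (fun x => UApp x b)); eauto. intros; constructor; auto.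
    apply (ustar_map (fun x => UApp a' x)); eauto. intros; constructor; auto.
  - apply rt_refl.
  - apply (ustar_map USuc); auto. intros; constructor; auto.
  - eapply rt_trans. apply (ustar_map (fun x => UNrec x b c)); eauto. intros; constructor; auto.
    eapply rt_trans. apply (ustar_map (fun x => UNrec a' x c)); eauto. intros; constructor; auto.
    apply (ustar_map (fun x => UNrec a' b' x)); eauto. intros; constructor; auto.
  - eapply rt_trans. apply (ustar_map (fun x => UApp (ULam x) a)); eauto. intros; constructor; constructor; auto.
    eapply rt_trans. apply (ustar_map (fun x => UApp (ULam b') x)); eauto. intros; constructor; auto.
    apply rt_step. constructor.
  - eapply rt_trans; [|eauto]. apply rt_step. constructor.
  - eapply rt_trans. apply (ustar_map (fun x => UNrec x s (USuc t))); eauto. intros; constructor; auto.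
    eapply rt_trans. apply (ustar_map (fun x => UNrec r' x (USuc t))); eauto. intros; constructor; auto.
    eapply rt_trans. apply (ustar_map (fun x => UNrec r' s' (USuc x))); eauto. intros; constructor; constructor; auto.
    apply rt_step. constructor.
Qed.

Lemma ustep_par : forall a b, ustep a b -> par a b.
Proof. induction 1; econstructor; auto using par_refl. Qed.

Lemma ustar_pstar : forall a b, ustar a b -> pstar a b.
Proof.
  intros a b H. apply clos_rt_rt1n in H. induction H. constructor.
  econstructor; eauto. apply ustep_par; auto.
Qed.

Lemma pstar_ustar : forall a b, pstar a b -> ustar a b.
Proof.
  induction 1. apply rt_refl. eapply rt_trans; eauto. apply par_ustar; auto.
Qed.

Lemma ustar_confl : forall t u1 u2, ustar t u1 -> ustar t u2 -> exists w, ustar u1 w /\ ustar u2 w.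
Proof.
  intros. destruct (pstar_confl t u1 u2) as [w [H1 H2]]; auto using ustar_pstar.
  exists w; split; apply pstar_ustar; auto.
Qed.

Lemma uconv_CR : forall a b, uconv a b -> exists w, ustar a w /\ ustar b w.
Proof.
  induction 1.
  - exists y. split. apply rt_step; auto. apply rt_refl.
  - exists x. split; apply rt_refl.
  - destruct IHclos_refl_sym_trans as [w [H1 H2]]. exists w; auto.
  - destruct IHclos_refl_sym_trans1 as [w1 [H1 H2]].
    destruct IHclos_refl_sym_trans2 as [w2 [H3 H4]].
    destruct (ustar_confl y w1 w2) as [w [H5 H6]]; auto.
    exists w. split; eapply rt_trans; eauto.
Qed.

Lemma unum_nf : forall n w, ustep (unum n) w -> False.
Proof.
  induction n; simpl; intros w H; inversion H; subst; eauto.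
Qed.

Lemma ustar_unum : forall n w, ustar (unum n) w -> w = unum n.
Proof.
  intros n w H. apply clos_rt_rt1n in H. inversion H; subst; auto.
  exfalso. eapply unum_nf; eauto.
Qed.

(* lifting erased reduction *)
Definition senvU (k : nat) (v : U) : nat -> U :=
  fun n => if Nat.ltb n k then UVar n else if Nat.eqb n k then v else UVar (pred n).

Lemma erase_Tsubst : forall t k r, erase (Tsubst k r t) = subst (senvU k (erase r)) (erase t).
Proof.
  induction t; intros; simpl; try rewrite IHt; try rewrite IHt1; try rewrite IHt2;
  try rewrite IHt3; auto.
  - unfold senvU. destruct (n <? k); auto. destruct (n =? k); auto.
  - f_equal. apply subst_ext. intros [|j]; unfold senvU, up; simpl; auto.
    rewrite erase_lift0, ltb_SS. destruct (j <? k) eqn:E1; auto.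
    destruct (j =? k) eqn:E2; auto. destruct j; simpl; auto.
    apply Nat.ltb_ge in E1. apply Nat.eqb_neq in E2. lia.
Qed.

Lemma erase_Tsubst0 : forall t r, erase (Tsubst 0 r t) = subst (scons (erase r) UVar) (erase t).
Proof. intros. rewrite erase_Tsubst. apply subst_ext. intros [|n]; reflexivity. Qed.

Lemma lift_step : forall u b, ustep u b -> forall a, erase a = u ->
  exists a', Tstep a a' /\ erase a' = b.
Proof.
  induction 1; intros a0 Ea.
  - destruct a0; simpl in Ea; try discriminate. inversion Ea; subst.
    destruct a0_1; simpl in H0; try discriminate. inversion H0; subst.
    eexists; split. constructor. apply erase_Tsubst0.
  - destruct a0; simpl in Ea; try discriminate. inversion Ea; subst.
    destruct a0_3; simpl in H2; try discriminate.
    eexists; split. constructor. reflexivity.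
  - destruct a0; simpl in Ea; try discriminate. inversion Ea; subst.
    destruct a0_3; simpl in H2; try discriminate. inversion H2; subst.
    eexists; split. constructor. reflexivity.
  - destruct a0; simpl in Ea; try discriminate. inversion Ea; subst.
    destruct (IHustep _ eq_refl) as [xx [Hx1 Hx2]].
    eexists; split. constructor; eauto. simpl; f_equal; auto.
  - destruct a0; simpl in Ea; try discriminate. inversion Ea; subst.
    destruct (IHustep _ eq_refl) as [xx [Hx1 Hx2]].
    eexists; split. constructor; eauto. simpl; f_equal; auto.
  - destruct a0; simpl in Ea; try discriminate. inversion Ea; subst.
    destruct (IHustep _ eq_refl) as [xx [Hx1 Hx2]].
    eexists; split. apply Tst_app2; eauto. simpl; f_equal; auto.
  - destruct a0; simpl in Ea; try discriminate. inversion Ea; subst.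
    destruct (IHustep _ eq_refl) as [xx [Hx1 Hx2]].
    eexists; split. constructor; eauto. simpl; f_equal; auto.
  - destruct a0; simpl in Ea; try discriminate. inversion Ea; subst.
    destruct (IHustep _ eq_refl) as [xx [Hx1 Hx2]].
    eexists; split. constructor; eauto. simpl; f_equal; auto.
  - destruct a0; simpl in Ea; try discriminate. inversion Ea; subst.
    destruct (IHustep _ eq_refl) as [xx [Hx1 Hx2]].
    eexists; split. apply Tst_nrec2; eauto. simpl; f_equal; auto.
  - destruct a0; simpl in Ea; try discriminate. inversion Ea; subst.
    destruct (IHustep _ eq_refl) as [xx [Hx1 Hx2]].
    eexists; split. apply Tst_nrec3; eauto. simpl; f_equal; auto.
Qed.

Lemma lift_star : forall u b, ustar u b -> forall a, erase a = u ->
  exists a', clos_refl_trans Ttm Tstep a a' /\ erase a' = b.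
Proof.
  intros u b H. apply clos_rt_rt1n in H. induction H; intros.
  - exists a; split; auto. apply rt_refl.
  - destruct (lift_step _ _ H _ H1) as [a1 [H2 H3]].
    destruct (IHclos_refl_trans_1n _ H3) as [a2 [H4 H5]].
    exists a2; split; auto. eapply rt_trans; eauto. apply rt_step; auto.
Qed.

Lemma erase_unum : forall n a, erase a = unum n -> a = Tnum n.
Proof.
  induction n; intros a H; destruct a; simpl in H; try discriminate; auto.
  inversion H. simpl. f_equal. auto.
Qed.

Definition idT := TLam TN (TVar 0).

Fixpoint Run (n : nat) : Ttm :=
  match n with
  | 0 => TLam (trt TN) (TApp (TVar 0) idT)
  | S m => TLam (trt (TArr TN (arrN m))) (TLam TN (TApp (Run m)
             (TLam (stt (arrN m)) (TApp (TVar 2) (apair TN (arrN m) (aret (TVar 1)) (TVar 0))))))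
  end.

Lemma Run_ty : forall n G, Thas_type G (Run n) (TArr (trt (arrN n)) (arrN n)).
Proof.
  induction n; intros; simpl.
  - constructor. econstructor. constructor; reflexivity. constructor. constructor; reflexivity.
  - constructor. constructor. econstructor. apply IHn.
    constructor. econstructor. constructor; reflexivity.
    apply apair_ty. apply aret_ty. constructor; reflexivity. constructor; reflexivity.
Qed.

Lemma Run_closed : forall n th, subst th (erase (Run n)) = erase (Run n).
Proof.
  induction n; intros; simpl; auto.
  rewrite IHn. reflexivity.
Qed.

Definition UApps (t : U) (l : list U) : U := fold_left UApp l t.

Lemma UApps_conv : forall l a b, uconv a b -> uconv (UApps a l) (UApps b l).
Proof.
  induction l; intros; simpl; auto. apply IHl. apply uconv_app; auto using uconv_refl.
Qed.

Definition uidU := ULam (UVar 0).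
Fixpoint ustack (ms : list nat) : U :=
  match ms with [] => uidU | m :: ms' => upair (uret (unum m)) (ustack ms') end.

Lemma run_conv : forall ms v, uconv (UApps (UApp (erase (Run (length ms))) v) (map unum ms))
  (UApp v (ustack ms)).
Proof.
  induction ms; intros; simpl.
  - eapply uconv_trans. apply ubeta. simpl. apply uconv_refl.
  - eapply uconv_trans. apply UApps_conv. apply ubeta2.
    simpl. rewrite Run_closed. simpl.
    eapply uconv_trans. apply IHms.
    eapply uconv_trans. apply ubeta. simpl.
    rewrite subst_beta_sh, !ren_unum, !subst_unum. unfold upair, uret. simpl. rewrite !ren_unum. apply uconv_refl.
Qed.

Lemma erase_Tapps : forall l t, erase (Tapps t l) = UApps (erase t) (map erase l).
Proof. induction l; intros; simpl; auto. Qed.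

Lemma erase_Tnum : forall n, erase (Tnum n) = unum n.
Proof. induction n; simpl; auto. rewrite IHn; auto. Qed.

Lemma Tr_apps : forall ss t rho sg S, Tr (apps t ss) rho sg S =
  Tr t rho sg (fold_right (fun s acc => upair (val s rho sg) acc) S ss).
Proof.
  induction ss; intros; simpl; auto.
Qed.

Lemma val_num : forall m rho sg, uconv (val (num m) rho sg) (uret (unum m)).
Proof.
  intros. unfold val. eapply uconv_trans. apply uconv_lam, Tr_num. unfold uret.
  rewrite ren_unum. apply uconv_refl.
Qed.

Lemma stack_conv : forall ms rho sg, uconv (ustack ms)
  (fold_right (fun s acc => upair (val s rho sg) acc) uidU (map num ms)).
Proof.
  induction ms; intros; simpl. apply uconv_refl.
  apply uconv_upair; auto. apply uconv_sym, val_num.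
Qed.

Lemma rt_rst : forall a b, clos_refl_trans Ttm Tstep a b -> Tconv a b.
Proof.
  induction 1. apply rst_step; auto. apply rst_refl. eapply rst_trans; eauto.
Qed.

Theorem mainTheorem7 (n : nat) (f : list nat -> nat) :
  representable_lmT n f -> representable_T n f.
Proof.
  intros [t [Ht Hrep]].
  destruct ((proj1 Tr_typed) [] [] t (arrN n) Ht [stt (arrN n)] (fun _ => TZero) (fun _ => TZero) (TVar 0))
    as [w [Hw Ew]].
  - intros [|x] B H; simpl in H; discriminate.
  - intros [|x] B H; simpl in H; discriminate.
  - constructor; reflexivity.
  - exists (TApp (Run n) (TLam (stt (arrN n)) w)). split.
    + econstructor. apply Run_ty. constructor. auto.
    + intros ms Hlen.
      assert (HC : uconv (erase (Tapps (TApp (Run n) (TLam (stt (arrN n)) w)) (map Tnum ms)))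
                         (unum (f ms))).
      { rewrite erase_Tapps, map_map.
        replace (map (fun x => erase (Tnum x)) ms) with (map unum ms)
          by (apply map_ext; intros; rewrite erase_Tnum; auto).
        simpl. subst n.
        eapply uconv_trans. apply run_conv.
        eapply uconv_trans. apply ubeta.
        rewrite Ew, (proj1 Tr_subst). simpl.
        eapply uconv_trans. apply Tr_cong_S. apply (stack_conv ms (fun _ => UZero) (fun _ => UZero)).
        rewrite <- Tr_apps.
        eapply uconv_trans. apply Tr_conv. apply Hrep. reflexivity.
        eapply uconv_trans. apply Tr_num.
        eapply uconv_trans. apply ubeta. simpl. apply uconv_refl. }
      destruct (uconv_CR _ _ HC) as [w' [H1 H2]].
      apply ustar_unum in H2. subst w'.
      destruct (lift_star _ _ H1 _ eq_refl) as [a' [H3 H4]].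
      apply erase_unum in H4. subst a'.
      apply rt_rst; auto.
Qed.
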